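(* Let $S$ and $T$ be valid configurations and $M:S\to T$ a bijection. Let $A=(A^S,A^T)$ and $B=(B^S,B^T)$ be two distinct pairs of $M$. Define $$\mathcal V^{(1)}_{AB}=\{\vec v\in\mathbb R^2 : D(A^S)\cap H_{\vec v}(B)\neq\emptyset\},\qquad \mathcal V^{(2)}_{AB}=\{\vec v\in\mathbb R^2 : D(B^T+\vec v)\cap H_{\vec v}(A)\neq\emptyset\}.$$ Then $$\mathcal V^{(1)}_{AB}=\bigl(W(A^S,B^S)\oplus D_2(o)\bigr)-B^T,\qquad \mathcal V^{(2)}_{AB}=\bigl(-W(B^T,A^T)\bigr)\oplus D_2(o)+A^S,$$ where $\oplus$ denotes Minkowski sum, $-X=\{-x:x\in X\}$, and $X+p=\{x+p:x\in X\}$.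
   Context: For $p\in\mathbb R^2$, $D(p)$ is the open unit disc centered at $p$ and $D_2(p)$ is the open disc of radius $2$ centered at $p$; $o$ is the origin. A configuration is a finite set of points in $\mathbb R^2$; it is valid if any two distinct points of it are at distance at least $2$. A pair of the bijection $M$ is $A=(A^S,A^T)$ with $A^S\in S$, $A^T=M(A^S)$. For a translation $\vec v\in\mathbb R^2$, the hippodrome $H_{\vec v}(A)$ is the convex hull of $D(A^S)\cup D(A^T+\vec v)$ (the region swept by a unit disc translated along the segment from $A^S$ to $A^T+\vec v$). For two points $a,b$ with $|a-b|\ge 2$, the wedge $W(a,b)$ is the closed wedge with apex $a$ whose bounding rays are parallel to, and directed like, the two common inner tangents of $D(b)$ and $D(a)$ directed from $b$ towards $a$; explicitly, $W(a,b)=\{a\}\cup\{a+w: w\neq 0,\ \angle(w,a-b)\le \arcsin(2/|a-b|)\}$, where $\angle(w,u)\in[0,\pi]$ is the angle between vectors $w$ and $u$. *)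

(* Defs.v *)
From Stdlib Require Import Reals Lra List.
Open Scope R_scope.

Definition point : Type := (R * R)%type.

Definition padd (p q : point) : point := (fst p + fst q, snd p + snd q).
Definition psub (p q : point) : point := (fst p - fst q, snd p - snd q).
Definition popp (p : point) : point := (- fst p, - snd p).
Definition pscale (t : R) (p : point) : point := (t * fst p, t * snd p).
Definition dot (p q : point) : R := fst p * fst q + snd p * snd q.
Definition norm (p : point) : R := sqrt (dot p p).
Definition dist (p q : point) : R := norm (psub p q).
Definition origin : point := (0, 0).

Definition D (p : point) : point -> Prop := fun x => dist x p < 1.
Definition D2 (p : point) : point -> Prop := fun x => dist x p < 2.

Definition valid (S : list point) : Prop :=
  NoDup S /\
  forall p q, In p S -> In q S -> p <> q -> 2 <= dist p q.

(* M : S -> T is a bijection (M given as a function on the plane,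
   only its values on S matter). *)
Definition bijection_on (S T : list point) (M : point -> point) : Prop :=
  (forall p, In p S -> In (M p) T) /\
  (forall p q, In p S -> In q S -> M p = M q -> p = q) /\
  (forall t, In t T -> exists p, In p S /\ M p = t).

Definition convex (C : point -> Prop) : Prop :=
  forall x y t, C x -> C y -> 0 <= t <= 1 ->
    C (padd (pscale (1 - t) x) (pscale t y)).

Definition convex_hull (X : point -> Prop) : point -> Prop :=
  fun z => forall C, convex C -> (forall y, X y -> C y) -> C z.

Definition hippodrome (v AS AT : point) : point -> Prop :=
  convex_hull (fun x => D AS x \/ D (padd AT v) x).

Definition angle (w u : point) : R := acos (dot w u / (norm w * norm u)).

Definition wedge (a b : point) : point -> Prop :=
  fun x => x = a \/
    exists w, w <> origin /\ x = padd a w /\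
      angle w (psub a b) <= asin (2 / dist a b).

Definition msum (X Y : point -> Prop) : point -> Prop :=
  fun z => exists x y, X x /\ Y y /\ z = padd x y.

(* Main.v *)
Require Import Defs.
From Stdlib Require Import Reals List Lra Psatz.
Require Import Defs.
Open Scope R_scope.

Lemma sqnn x : 0 <= x*x.
Proof. pose proof (Rle_0_sqr x); unfold Rsqr in *; lra. Qed.

Lemma Rdiv_le_0_compat a b : 0 <= a -> 0 < b -> 0 <= a / b.
Proof. intros. unfold Rdiv. apply Rmult_le_pos; auto. left; apply Rinv_0_lt_compat; auto. Qed.

Lemma sq_lt_bound c m : 0 < m -> c*c < m*m -> -m < c < m.
Proof.
  intros Hm H. split.
  - destruct (Rle_lt_dec c (-m)) as [Hc|]; auto.
    assert (m*m <= c*c) by (replace (c*c) with ((-c)*(-c)) by ring; apply Rmult_le_compat; lra). lra.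
  - destruct (Rle_lt_dec m c) as [Hc|]; auto.
    assert (m*m <= c*c) by (apply Rmult_le_compat; lra). lra.
Qed.

Definition Kc (u1 u2 x1 x2 : R) : Prop :=
  0 <= x1*u1+x2*u2 /\
  (x1*x1+x2*x2)*(u1*u1+u2*u2-4) <= (x1*u1+x2*u2)*(x1*u1+x2*u2).

Lemma CS2 a1 a2 b1 b2 : (a1*b1+a2*b2)*(a1*b1+a2*b2) <= (a1*a1+a2*a2)*(b1*b1+b2*b2).
Proof. pose proof (Rle_0_sqr (a1*b2-a2*b1)) as Hs; unfold Rsqr in Hs.
  replace ((a1*a1+a2*a2)*(b1*b1+b2*b2)) with ((a1*b1+a2*b2)*(a1*b1+a2*b2) + (a1*b2-a2*b1)*(a1*b2-a2*b1)) by ring. lra. Qed.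

Lemma Kd_real L c r : 4 <= L -> 0 <= r < 4 -> c*c <= r*L ->
  0 <= L+c /\ (L+2*c+r)*(L-4) <= (L+c)*(L+c).
Proof.
  intros HL Hr Hc. split.
  - assert (c*c < L*L) by nra. nra.
  - assert (0 <= (4-r)*(L-4)) by nra. pose proof (sqnn (c+4)); nra.
Qed.

Lemma K_disc u1 u2 p1 p2 : 4 <= u1*u1+u2*u2 -> p1*p1+p2*p2 < 4 ->
  Kc u1 u2 (u1+p1) (u2+p2).
Proof.
  intros HL Hp. pose proof (CS2 p1 p2 u1 u2) as HC.
  destruct (Kd_real (u1*u1+u2*u2) (p1*u1+p2*u2) (p1*p1+p2*p2)) as [H1 H2];
    [lra | split; nra | lra |].
  unfold Kc. split.
  - replace ((u1+p1)*u1+(u2+p2)*u2) with (u1*u1+u2*u2+(p1*u1+p2*u2)) by ring; lra.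
  - replace ((u1+p1)*u1+(u2+p2)*u2) with (u1*u1+u2*u2+(p1*u1+p2*u2)) by ring.
    replace ((u1 + p1) * (u1 + p1) + (u2 + p2) * (u2 + p2)) with
      (u1*u1+u2*u2+2*(p1*u1+p2*u2)+(p1*p1+p2*p2)) by ring. lra.
Qed.

Lemma K_scale u1 u2 x1 x2 l : 0 <= l -> Kc u1 u2 x1 x2 -> Kc u1 u2 (l*x1) (l*x2).
Proof.
  intros Hl [H1 H2]. unfold Kc. split.
  - replace (l*x1*u1+l*x2*u2) with (l*(x1*u1+x2*u2)) by ring. nra.
  - replace (l*x1*u1+l*x2*u2) with (l*(x1*u1+x2*u2)) by ring.
    replace (l*x1*(l*x1)+l*x2*(l*x2)) with (l*l*(x1*x1+x2*x2)) by ring.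
    assert (0 <= l*l) by nra. nra.
Qed.

Lemma core_fwd u1 u2 Q1 Q2 : 4 <= u1*u1+u2*u2 ->
  (exists t, 0<=t<=1 /\ (-u1 + t*(Q1+u1))*(-u1 + t*(Q1+u1)) + (-u2 + t*(Q2+u2))*(-u2 + t*(Q2+u2)) < 4) ->
  exists x1 x2, Kc u1 u2 x1 x2 /\ (Q1-x1)*(Q1-x1)+(Q2-x2)*(Q2-x2) < 4.
Proof.
  intros HL [t [Ht Hp]].
  assert (Ht0 : t <> 0). { intro E. subst t. nra. }
  exists ((1-t)*(Q1+u1)), ((1-t)*(Q2+u2)). split.
  - pose proof (K_disc u1 u2 (-u1 + t*(Q1+u1)) (-u2 + t*(Q2+u2)) HL Hp) as HK.
    pose proof (K_scale _ _ _ _ ((1-t)/t) ltac:(apply Rdiv_le_0_compat; lra) HK) as HK2.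
    replace ((1-t)*(Q1+u1)) with ((1 - t) / t * (u1 + (- u1 + t * (Q1 + u1)))) by (field; auto).
    replace ((1-t)*(Q2+u2)) with ((1 - t) / t * (u2 + (- u2 + t * (Q2 + u2)))) by (field; auto).
    exact HK2.
  - replace (Q1 - (1-t)*(Q1+u1)) with (-u1 + t*(Q1+u1)) by ring.
    replace (Q2 - (1-t)*(Q2+u2)) with (-u2 + t*(Q2+u2)) by ring. exact Hp.
Qed.

Lemma numer_bound E c Dd k X : 0<k -> 0<X -> 0<=E <= 4*X*X -> 0<=Dd<4 -> c*c <= E*Dd ->
  E + 2*k*c + k*k*Dd < 4*(k+X)*(k+X).
Proof.
  intros Hk HX [HE0 HE] [HD0 HD] Hc.
  assert (E*Dd <= (4*X*X)*4) by (apply Rmult_le_compat; lra).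
  assert (c <= 4*X).
  { destruct (Rle_lt_dec c (4*X)) as [|Hlt]; auto.
    assert ((4*X)*(4*X) < c*c) by (apply Rmult_le_0_lt_compat; lra). lra. }
  assert (2*k*c <= 2*k*(4*X)) by (apply Rmult_le_compat_l; lra).
  assert (k*k*Dd <= k*k*4) by (apply Rmult_le_compat_l; [pose proof (sqnn k)|]; lra).
  assert (0 < k*k) by (apply Rmult_lt_0_compat; lra).
  assert (k*k*Dd < k*k*4) by (apply Rmult_lt_compat_l; lra).
  nra.
Qed.

Lemma small_t g W : 0 < g -> 0 <= W ->
  let t := g/(g+W) in 0 <= t <= 1 /\ 4 - 2*t*g + t*t*W < 4.
Proof.
  intros Hg HW t.
  assert (Ht : t*(g+W) = g) by (unfold t; field; lra).
  assert (0 < t) by (unfold t; apply Rdiv_lt_0_compat; lra).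
  split; [split; nra|].
  assert (t*W < 2*g) by nra. nra.
Qed.

Lemma core_bwd u1 u2 x1 x2 d1 d2 : 4 <= u1*u1+u2*u2 -> Kc u1 u2 x1 x2 ->
  d1*d1+d2*d2 < 4 ->
  exists t, 0<=t<=1 /\ (-u1 + t*(x1+d1+u1))*(-u1 + t*(x1+d1+u1)) + (-u2 + t*(x2+d2+u2))*(-u2 + t*(x2+d2+u2)) < 4.
Proof.
  intros HL [Hk HK] Hd.
  set (X := x1*x1+x2*x2) in *. set (k := x1*u1+x2*u2) in *.
  destruct (Req_dec X 0) as [HX0|HX0].
  { assert (x1 = 0) by (unfold X in HX0; nra). assert (x2 = 0) by (unfold X in HX0; nra).
    subst x1 x2. exists 1. split; [lra|]. nra. }
  assert (HX : 0 < X) by (unfold X in *; nra).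
  destruct (Rle_lt_dec k 0) as [Hk0|Hk0].
  - assert (k = 0) by lra.
    assert (HL4 : u1*u1+u2*u2 = 4) by nra.
    set (g := u1*(x1+d1+u1)+u2*(x2+d2+u2)).
    set (W := (x1+d1+u1)*(x1+d1+u1)+(x2+d2+u2)*(x2+d2+u2)).
    assert (Hud : (d1*u1+d2*u2)*(d1*u1+d2*u2) < 16) by (pose proof (CS2 d1 d2 u1 u2); nra).
    assert (Hg : 0 < g).
    { replace g with (k + (d1*u1+d2*u2) + (u1*u1+u2*u2)) by (unfold g, k; ring).
      destruct (sq_lt_bound (d1*u1+d2*u2) 4); lra. }
    destruct (small_t g W Hg ltac:(unfold W; pose proof (sqnn (x1+d1+u1)); pose proof (sqnn (x2+d2+u2)); lra)) as [Ht Hf].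
    exists (g/(g+W)). split; auto.
    set (t := g/(g+W)) in *.
    replace ((-u1 + t*(x1+d1+u1))*(-u1 + t*(x1+d1+u1)) + (-u2 + t*(x2+d2+u2))*(-u2 + t*(x2+d2+u2)))
      with ((u1*u1+u2*u2) - 2*t*g + t*t*W) by (unfold g, W; ring).
    rewrite HL4. exact Hf.
  - exists (k/(k+X)). split.
    { split. apply Rdiv_le_0_compat; lra. apply Rmult_le_reg_r with (k+X); [lra|].
      field_simplify; lra. }
    set (e1 := k*x1 - X*u1 + k*d1). set (e2 := k*x2 - X*u2 + k*d2).
    assert (HE : e1*e1+e2*e2 < 4*(k+X)*(k+X)).
    { pose proof (CS2 (k*x1 - X*u1) (k*x2 - X*u2) d1 d2) as HC.
      assert (HEq : (k*x1 - X*u1)*(k*x1 - X*u1) + (k*x2 - X*u2)*(k*x2 - X*u2)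
                   = X*(X*(u1*u1+u2*u2) - k*k)) by (unfold X, k; ring).
      replace (e1*e1+e2*e2) with
        (((k*x1 - X*u1)*(k*x1 - X*u1) + (k*x2 - X*u2)*(k*x2 - X*u2))
         + 2*k*((k*x1 - X*u1)*d1 + (k*x2 - X*u2)*d2) + k*k*(d1*d1+d2*d2)) by (unfold e1, e2; ring).
      apply numer_bound; try lra.
      + rewrite HEq. pose proof (CS2 x1 x2 u1 u2) as HCS. fold X k in HCS.
        split. apply Rmult_le_pos; lra.
        replace (4*X*X) with (X*(4*X)) by ring. apply Rmult_le_compat_l; lra.
      + split; nra. }
    replace ((-u1 + k/(k+X)*(x1+d1+u1))*(-u1 + k/(k+X)*(x1+d1+u1)) + (-u2 + k/(k+X)*(x2+d2+u2))*(-u2 + k/(k+X)*(x2+d2+u2)))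
      with ((e1*e1+e2*e2)/((k+X)*(k+X))) by (unfold e1, e2; field; lra).
    apply Rmult_lt_reg_r with ((k+X)*(k+X)); [nra|].
    unfold Rdiv. rewrite Rmult_assoc, Rinv_l by nra. lra.
Qed.

Lemma dot_nn p : 0 <= dot p p.
Proof. unfold dot. pose proof (sqnn (fst p)); pose proof (sqnn (snd p)); lra. Qed.

Lemma sqrt_lt_iff a r : 0 <= a -> 0 < r -> (sqrt a < r <-> a < r*r).
Proof.
  intros Ha Hr. pose proof (sqrt_sqrt a Ha) as E. pose proof (sqrt_pos a). split; intro Hs.
  - rewrite <- E. apply Rmult_le_0_lt_compat; lra.
  - destruct (Rlt_or_le (sqrt a) r) as [|Hle]; auto.
    assert (r*r <= sqrt a * sqrt a) by (apply Rmult_le_compat; lra). lra.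
Qed.

Lemma dist_lt_iff x p r : 0 < r -> (dist x p < r <-> dot (psub x p) (psub x p) < r*r).
Proof. intros. unfold dist, norm. apply sqrt_lt_iff; auto. apply dot_nn. Qed.

Lemma dist_ge x p : 2 <= dist x p -> 4 <= dot (psub x p) (psub x p).
Proof.
  intros H. destruct (Rlt_or_le (dot (psub x p) (psub x p)) 4) as [Hl|]; auto.
  assert (dist x p < 2) by (apply dist_lt_iff; lra). lra.
Qed.

Definition seg (b q : point) (t : R) : point := padd (pscale (1-t) b) (pscale t q).

Lemma hull_iff b q z : convex_hull (fun x => D b x \/ D q x) z <->
  exists t, 0 <= t <= 1 /\ dot (psub z (seg b q t)) (psub z (seg b q t)) < 1.
Proof.
  split.
  - intro H. apply H.
    + intros x y s [t1 [Ht1 H1]] [t2 [Ht2 H2]] Hs.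
      exists ((1-s)*t1+s*t2). split; [nra|].
      destruct x as [x1 x2], y as [y1 y2], b as [b1 b2], q as [q1 q2].
      unfold seg, dot, psub, padd, pscale in *; simpl in *.
      set (e11 := x1 - ((1 - t1) * b1 + t1 * q1)) in *.
      set (e12 := x2 - ((1 - t1) * b2 + t1 * q2)) in *.
      set (e21 := y1 - ((1 - t2) * b1 + t2 * q1)) in *.
      set (e22 := y2 - ((1 - t2) * b2 + t2 * q2)) in *.
      replace ((1 - s) * x1 + s * y1 - ((1 - ((1 - s) * t1 + s * t2)) * b1 + ((1 - s) * t1 + s * t2) * q1))
        with ((1-s)*e11 + s*e21) by (unfold e11, e21; ring).
      replace ((1 - s) * x2 + s * y2 - ((1 - ((1 - s) * t1 + s * t2)) * b2 + ((1 - s) * t1 + s * t2) * q2))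
        with ((1-s)*e12 + s*e22) by (unfold e12, e22; ring).
      assert (Hid : ((1-s)*e11 + s*e21)*((1-s)*e11 + s*e21) + ((1-s)*e12 + s*e22)*((1-s)*e12 + s*e22)
        = (1-s)*(e11*e11+e12*e12) + s*(e21*e21+e22*e22) - s*(1-s)*((e11-e21)*(e11-e21)+(e12-e22)*(e12-e22))) by ring.
      rewrite Hid.
      assert (0 <= s*(1-s)*((e11-e21)*(e11-e21)+(e12-e22)*(e12-e22))).
      { apply Rmult_le_pos; [apply Rmult_le_pos; lra|].
        pose proof (sqnn (e11-e21)); pose proof (sqnn (e12-e22)); lra. }
      assert ((1-s)*(e11*e11+e12*e12) <= (1-s)*1) by (apply Rmult_le_compat_l; lra).
      assert (s*(e21*e21+e22*e22) <= s*1) by (apply Rmult_le_compat_l; lra).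
      destruct (Req_dec s 0).
      * subst s. lra.
      * assert (s*(e21*e21+e22*e22) < s*1) by (apply Rmult_lt_compat_l; lra). lra.
    + intros y [Hy|Hy]; (apply dist_lt_iff in Hy; [|lra]).
      * exists 0. split; [lra|]. destruct y, b, q. unfold seg, dot, psub, padd, pscale in *; simpl in *.
        replace (r - ((1 - 0) * r1 + 0 * r3)) with (r - r1) by ring.
        replace (r0 - ((1 - 0) * r2 + 0 * r4)) with (r0 - r2) by ring. lra.
      * exists 1. split; [lra|]. destruct y, b, q. unfold seg, dot, psub, padd, pscale in *; simpl in *.
        replace (r - ((1 - 1) * r1 + 1 * r3)) with (r - r3) by ring.
        replace (r0 - ((1 - 1) * r2 + 1 * r4)) with (r0 - r4) by ring. lra.
  - intros [t [Ht He]] C HC Hsub.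
    set (e := psub z (seg b q t)) in *.
    assert (Hb : C (padd b e)).
    { apply Hsub. left. apply dist_lt_iff; [lra|].
      replace (psub (padd b e) b) with e; [lra|]. destruct b, e; unfold psub, padd; simpl; f_equal; ring. }
    assert (Hq : C (padd q e)).
    { apply Hsub. right. apply dist_lt_iff; [lra|].
      replace (psub (padd q e) q) with e; [lra|]. destruct q, e; unfold psub, padd; simpl; f_equal; ring. }
    pose proof (HC _ _ t Hb Hq Ht) as Hc.
    replace z with (padd (pscale (1 - t) (padd b e)) (pscale t (padd q e))); auto.
    unfold e. destruct z, b, q; unfold seg, psub, padd, pscale; simpl; f_equal; ring.
Qed.

Lemma lhs_iff a b q :
  (exists z, D a z /\ convex_hull (fun x => D b x \/ D q x) z) <->
  exists t, 0 <= t <= 1 /\ dot (psub a (seg b q t)) (psub a (seg b q t)) < 4.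
Proof.
  split.
  - intros [z [Hz Hh]]. apply hull_iff in Hh. destruct Hh as [t [Ht He]].
    exists t. split; auto. apply dist_lt_iff in Hz; [|lra].
    set (P := seg b q t) in *. destruct a as [a1 a2], z as [z1 z2], P as [p1 p2].
    unfold dot, psub in *; simpl in *.
    replace ((a1 - p1) * (a1 - p1) + (a2 - p2) * (a2 - p2)) with
      (2*((z1-a1)*(z1-a1)+(z2-a2)*(z2-a2)) + 2*((z1-p1)*(z1-p1)+(z2-p2)*(z2-p2))
       - ((2*z1-a1-p1)*(2*z1-a1-p1)+(2*z2-a2-p2)*(2*z2-a2-p2))) by ring.
    pose proof (sqnn (2*z1-a1-p1)); pose proof (sqnn (2*z2-a2-p2)). lra.
  - intros [t [Ht Hd]]. set (P := seg b q t) in *.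
    exists (pscale (/2) (padd a P)). split.
    + apply dist_lt_iff; [lra|]. destruct a as [a1 a2], P as [p1 p2].
      unfold dot, psub, pscale, padd in *; simpl in *.
      replace (/ 2 * (a1 + p1) - a1) with ((p1 - a1)/2) by field.
      replace (/ 2 * (a2 + p2) - a2) with ((p2 - a2)/2) by field.
      replace ((a1 - p1) * (a1 - p1) + (a2 - p2) * (a2 - p2)) with
        ((p1 - a1) * (p1 - a1) + (p2 - a2) * (p2 - a2)) in Hd by ring.
      replace ((p1 - a1) / 2 * ((p1 - a1) / 2) + (p2 - a2) / 2 * ((p2 - a2) / 2))
        with (((p1 - a1) * (p1 - a1) + (p2 - a2) * (p2 - a2))/4) by field. lra.
    + apply hull_iff. exists t. split; auto. fold P. destruct a as [a1 a2], P as [p1 p2].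
      unfold dot, psub, pscale, padd in *; simpl in *.
      replace (/ 2 * (a1 + p1) - p1) with ((a1 - p1)/2) by field.
      replace (/ 2 * (a2 + p2) - p2) with ((a2 - p2)/2) by field.
      replace ((a1 - p1) / 2 * ((a1 - p1) / 2) + (a2 - p2) / 2 * ((a2 - p2) / 2))
        with (((a1 - p1) * (a1 - p1) + (a2 - p2) * (a2 - p2))/4) by field. lra.
Qed.

Lemma asin_range s : 0 < s <= 1 -> 0 <= asin s <= PI.
Proof.
  intros Hs. rewrite asin_acos by lra. pose proof (acos_bound s). pose proof PI_RGT_0.
  assert (acos s <= PI/2).
  { destruct (Rle_lt_dec (acos s) (PI/2)) as [|Hlt]; auto.
    assert (cos (acos s) < cos (PI/2)) by (apply cos_decreasing_1; lra).
    rewrite cos_acos, cos_PI2 in H1 by lra. lra. }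
  lra.
Qed.

Lemma acos_le_iff c a : -1 <= c <= 1 -> 0 <= a <= PI ->
  (acos c <= a <-> cos a <= c).
Proof.
  intros Hc Ha. pose proof (acos_bound c). split; intro Hh.
  - destruct (Rle_lt_or_eq_dec _ _ Hh) as [Hlt|Heq].
    + rewrite <- (cos_acos c) by lra. left. apply cos_decreasing_1; lra.
    + rewrite <- Heq, cos_acos; lra.
  - destruct (Rle_lt_dec (acos c) a) as [|Hlt]; auto.
    assert (cos (acos c) < cos a) by (apply cos_decreasing_1; lra).
    rewrite cos_acos in H0 by lra. lra.
Qed.

Lemma angle_iff x u : x <> origin -> 4 <= dot u u ->
  (angle x u <= asin (2 / norm u) <-> Kc (fst u) (snd u) (fst x) (snd x)).
Proof.
  intros Hx HL. unfold angle.
  set (X := dot x x). set (L := dot u u) in *. set (k := dot x u).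
  assert (HX : 0 < X).
  { destruct x as [x1 x2]. unfold X, dot; simpl.
    pose proof (sqnn x1); pose proof (sqnn x2).
    destruct (Req_dec (x1*x1+x2*x2) 0) as [E|]; [|lra].
    exfalso. apply Hx. unfold origin. f_equal; nra. }
  assert (Hkc : k*k <= X*L) by (unfold k, X, L, dot; apply CS2).
  set (y := norm x). set (m := norm u).
  assert (Hy2 : y*y = X) by (apply sqrt_sqrt; lra).
  assert (Hm2 : m*m = L) by (apply sqrt_sqrt; lra).
  assert (Hy0 : 0 <= y) by apply sqrt_pos. assert (Hm0 : 0 <= m) by apply sqrt_pos.
  assert (Hy : 0 < y) by (destruct (Req_dec y 0) as [E|]; [rewrite E in Hy2; lra|lra]).
  assert (Hm : 2 <= m) by (destruct (Rle_lt_dec 2 m) as [|Hlt]; auto;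
     assert (m*m < 2*2) by (apply Rmult_le_0_lt_compat; lra); lra).
  assert (Hym : 0 < y*m) by (apply Rmult_lt_0_compat; lra).
  set (c := k/(y*m)).
  assert (Hck : c*(y*m) = k) by (unfold c; field; lra).
  assert (Hc : -1 <= c <= 1).
  { assert (Hcc : c*c*((y*m)*(y*m)) <= 1*((y*m)*(y*m))).
    { replace (c*c*((y*m)*(y*m))) with ((c*(y*m))*(c*(y*m))) by ring. rewrite Hck.
      replace ((y*m)*(y*m)) with (X*L) by (rewrite <- Hy2, <- Hm2; ring). lra. }
    apply Rmult_le_reg_r in Hcc; [|nra].
    split.
    - destruct (Rle_lt_dec (-1) c) as [|Hl]; auto.
      assert (1*1 < c*c) by (replace (c*c) with ((-c)*(-c)) by ring; apply Rmult_le_0_lt_compat; lra). lra.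
    - destruct (Rle_lt_dec c 1) as [|Hl]; auto.
      assert (1*1 < c*c) by (apply Rmult_le_0_lt_compat; lra). lra. }
  assert (HK : Kc (fst u) (snd u) (fst x) (snd x) <-> 0 <= k /\ X*(L-4) <= k*k).
  { unfold Kc, k, X, L, dot. split; auto. }
  rewrite HK. clear HK.
  set (s := 2/m).
  assert (Hs : 0 < s <= 1).
  { unfold s. split. apply Rdiv_lt_0_compat; lra.
    apply Rmult_le_reg_r with m; [lra|]. unfold Rdiv. rewrite Rmult_assoc, Rinv_l by lra. lra. }
  rewrite (acos_le_iff c (asin s) Hc (asin_range s Hs)).
  rewrite cos_asin by lra. unfold Rsqr.
  assert (Hsm : s*s*L = 4) by (unfold s; rewrite <- Hm2; field; lra).
  assert (H1s : 0 <= 1 - s*s).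
  { assert (s*s <= 1*1) by (apply Rmult_le_compat; lra). lra. }
  set (r := sqrt (1 - s*s)).
  assert (Hr2 : r*r = 1 - s*s) by (apply sqrt_sqrt; lra).
  assert (Hr0 : 0 <= r) by apply sqrt_pos.
  assert (Hrym : (r*(y*m))*(r*(y*m)) = X*(L-4)).
  { replace ((r*(y*m))*(r*(y*m))) with ((r*r)*(y*y)*(m*m)) by ring.
    rewrite Hr2, Hy2, Hm2. replace (L-4) with (L - s*s*L) by lra. ring. }
  assert (E : r <= c <-> r*(y*m) <= k).
  { rewrite <- Hck. split; intro Hh.
    - apply Rmult_le_compat_r; lra.
    - apply Rmult_le_reg_r with (y*m); lra. }
  rewrite E. clear E.
  assert (0 <= r*(y*m)) by (apply Rmult_le_pos; lra).
  split.
  - intro Hh. split; [lra|]. rewrite <- Hrym. apply Rmult_le_compat; lra.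
  - intros [Hk0 Hkk]. destruct (Rle_lt_dec (r*(y*m)) k) as [|Hlt]; auto.
    assert (k*k < (r*(y*m))*(r*(y*m))) by (apply Rmult_le_0_lt_compat; lra). lra.
Qed.

Lemma wedge_iff a b w : 2 <= dist a b ->
  (wedge a b w <-> Kc (fst (psub a b)) (snd (psub a b)) (fst (psub w a)) (snd (psub w a))).
Proof.
  intros Hd. pose proof (dist_ge _ _ Hd) as HL. unfold wedge. split.
  - intros [E | [x [Hx [Ew Ha]]]].
    + subst w. destruct a as [a1 a2], b as [b1 b2]. unfold Kc, psub; simpl.
      replace (a1 - a1) with 0 by ring. replace (a2 - a2) with 0 by ring. split; lra.
    + unfold dist in Ha. apply angle_iff in Ha; auto.
      replace (psub w a) with x; auto. subst w. destruct a, x; unfold psub, padd; simpl; f_equal; ring.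
  - intros HK. destruct (Req_dec (fst (psub w a)) 0) as [E1|E1];
      [destruct (Req_dec (snd (psub w a)) 0) as [E2|E2]|].
    + left. destruct w, a; unfold psub in *; simpl in *; f_equal; lra.
    + right. exists (psub w a). split; [intro E; rewrite E in E2; simpl in E2; lra|].
      split; [destruct w, a; unfold psub, padd; simpl; f_equal; ring|].
      unfold dist. apply angle_iff; auto. intro E; rewrite E in E2; simpl in E2; lra.
    + right. exists (psub w a). split; [intro E; rewrite E in E1; simpl in E1; lra|].
      split; [destruct w, a; unfold psub, padd; simpl; f_equal; ring|].
      unfold dist. apply angle_iff; auto. intro E; rewrite E in E1; simpl in E1; lra.
Qed.

Lemma part a b q : 2 <= dist a b ->
  (exists t, 0 <= t <= 1 /\ dot (psub a (seg b q t)) (psub a (seg b q t)) < 4) <->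
  exists w d, wedge a b w /\ dot d d < 4 /\ q = padd w d.
Proof.
  intros Hd. pose proof (dist_ge _ _ Hd) as HL.
  split.
  - intros Ht.
    destruct a as [a1 a2], b as [b1 b2], q as [q1 q2].
    unfold dot, psub in HL; simpl in HL.
    destruct (core_fwd (a1-b1) (a2-b2) (q1-a1) (q2-a2) HL) as [x1 [x2 [HK Hx]]].
    { destruct Ht as [t [Ht H]]. exists t. split; auto.
      unfold seg, dot, psub, padd, pscale in H; simpl in H.
      replace ((- (a1 - b1) + t * (q1 - a1 + (a1 - b1))) * (- (a1 - b1) + t * (q1 - a1 + (a1 - b1))) +
        (- (a2 - b2) + t * (q2 - a2 + (a2 - b2))) * (- (a2 - b2) + t * (q2 - a2 + (a2 - b2))))
      with ((a1 - ((1 - t) * b1 + t * q1)) * (a1 - ((1 - t) * b1 + t * q1)) +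
        (a2 - ((1 - t) * b2 + t * q2)) * (a2 - ((1 - t) * b2 + t * q2))) by ring. exact H. }
    exists (a1 + x1, a2 + x2), (q1 - a1 - x1, q2 - a2 - x2). split; [|split].
    + apply wedge_iff; auto. unfold psub; simpl.
      replace (a1 + x1 - a1) with x1 by ring. replace (a2 + x2 - a2) with x2 by ring. exact HK.
    + unfold dot; simpl. replace (q1 - a1 - x1) with (q1 - a1 - x1) by ring. exact Hx.
    + unfold padd; simpl. f_equal; ring.
  - intros [w [d [Hw [Hdd Hq]]]]. apply wedge_iff in Hw; auto. subst q.
    destruct a as [a1 a2], b as [b1 b2], w as [w1 w2], d as [d1 d2].
    unfold dot, psub in HL, Hw, Hdd; simpl in HL, Hw, Hdd.
    destruct (core_bwd (a1-b1) (a2-b2) (w1-a1) (w2-a2) d1 d2 HL Hw Hdd) as [t [Ht H]].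
    exists t. split; auto. unfold seg, dot, psub, padd, pscale; simpl.
    replace ((a1 - ((1 - t) * b1 + t * (w1 + d1))) * (a1 - ((1 - t) * b1 + t * (w1 + d1))) +
      (a2 - ((1 - t) * b2 + t * (w2 + d2))) * (a2 - ((1 - t) * b2 + t * (w2 + d2))))
    with ((- (a1 - b1) + t * (w1 - a1 + d1 + (a1 - b1))) * (- (a1 - b1) + t * (w1 - a1 + d1 + (a1 - b1))) +
      (- (a2 - b2) + t * (w2 - a2 + d2 + (a2 - b2))) * (- (a2 - b2) + t * (w2 - a2 + d2 + (a2 - b2)))) by ring.
    exact H.
Qed.

Lemma D2o d : D2 origin d <-> dot d d < 4.
Proof.
  unfold D2. rewrite dist_lt_iff by lra. destruct d; unfold psub, origin, dot; simpl.
  replace (r - 0) with r by ring. replace (r0 - 0) with r0 by ring. lra.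
Qed.

Lemma psub_shift a b v : psub (padd a v) (padd b v) = psub a b.
Proof. destruct a, b, v; unfold psub, padd; simpl; f_equal; ring. Qed.

Lemma wedge_shift a b w v : 2 <= dist a b ->
  (wedge (padd a v) (padd b v) (padd w v) <-> wedge a b w).
Proof.
  intros Hd. assert (Hd' : 2 <= dist (padd a v) (padd b v)) by (unfold dist; rewrite psub_shift; auto).
  rewrite (wedge_iff _ _ _ Hd'), (wedge_iff _ _ _ Hd), !psub_shift. tauto.
Qed.

Lemma seg_swap b q t : seg b q t = seg q b (1-t).
Proof. destruct b, q; unfold seg, padd, pscale; simpl; f_equal; ring. Qed.

Theorem mainTheorem1 (S T : list point) (M : point -> point)
  (AS BS : point) :
  valid S -> valid T -> bijection_on S T M ->
  In AS S -> In BS S -> AS <> BS ->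
  let AT := M AS in let BT := M BS in
  (forall v : point,
     (exists z, D AS z /\ hippodrome v BS BT z) <->
     (exists y, msum (wedge AS BS) (D2 origin) y /\ v = psub y BT)) /\
  (forall v : point,
     (exists z, D (padd BT v) z /\ hippodrome v AS AT z) <->
     (exists y, msum (fun x => wedge BT AT (popp x)) (D2 origin) y /\
                v = padd y AS)).
Proof.
  intros [_ HS] [_ HT] [HM1 [HM2 _]] HA HB HAB AT BT.
  assert (H1 : 2 <= dist AS BS) by (apply HS; auto).
  assert (H2 : 2 <= dist BT AT).
  { unfold AT, BT. apply HT; [apply HM1; auto|apply HM1; auto|]. intro E. apply HAB. symmetry. apply HM2; auto. }
  split; intro v; unfold hippodrome; rewrite lhs_iff.
  - rewrite (part _ _ _ H1). split.
    + intros [w [d [Hw [Hd Hq]]]]. exists (padd BT v). split.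
      * exists w, d. split; auto. split; auto. apply D2o; auto.
      * destruct BT, v; unfold psub, padd; simpl; f_equal; ring.
    + intros [y [[w [d [Hw [Hd Hy]]]] Hv]]. exists w, d. split; auto. split; [apply D2o; auto|].
      subst v y. destruct BT, w, d; unfold psub, padd; simpl; f_equal; ring.
  - assert (E : (exists t, 0 <= t <= 1 /\
       dot (psub (padd BT v) (seg AS (padd AT v) t)) (psub (padd BT v) (seg AS (padd AT v) t)) < 4) <->
       (exists t, 0 <= t <= 1 /\
       dot (psub (padd BT v) (seg (padd AT v) AS t)) (psub (padd BT v) (seg (padd AT v) AS t)) < 4)).
    { split; intros [t [Ht Hh]]; exists (1-t); (split; [lra|]); rewrite seg_swap;
        replace (1 - (1-t)) with t by ring; exact Hh. }
    rewrite E.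
    assert (H2' : 2 <= dist (padd BT v) (padd AT v)) by (unfold dist; rewrite psub_shift; auto).
    rewrite (part _ _ _ H2'). split.
    + intros [w [d [Hw [Hd Hq]]]].
      exists (padd (popp (psub w v)) (popp d)). split.
      * exists (popp (psub w v)), (popp d). split; [|split; auto].
        -- replace (popp (popp (psub w v))) with (psub w v)
             by (destruct w, v; unfold popp, psub; simpl; f_equal; ring).
           apply (wedge_shift _ _ _ v H2).
           replace (padd (psub w v) v) with w by (destruct w, v; unfold psub, padd; simpl; f_equal; ring).
           exact Hw.
        -- apply D2o. destruct d; unfold dot, popp in *; simpl in *. lra.
      * subst AS. destruct w, v, d; unfold psub, padd, popp; simpl; f_equal; ring.
    + intros [y [[x [d [Hx [Hd Hy]]]] Hv]].
      exists (padd (popp x) v), (popp d). split; [|split].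
      * apply (wedge_shift _ _ _ v H2). exact Hx.
      * apply D2o in Hd. destruct d; unfold dot, popp in *; simpl in *. lra.
      * subst v y. destruct AS, x, d; unfold psub, padd, popp; simpl; f_equal; ring.
Qed.
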